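(* Let $G\in\mathcal{F}$ and let $C$ be a clique of maximum size in $G$, chosen among all maximum cliques so that the number of edges with exactly one endpoint in $C$ is minimal. Then the vertex set of $C$ can be partitioned into two nonempty subsets $X$ and $Y$ such that for every vertex $v$ not in $C$, the set of neighbors of $v$ in $C$ is equal to $X$, to $Y$, or to $\emptyset$.
   Context: Graphs are finite and simple; spectrum means adjacency spectrum. $\mathcal{F}$ denotes the set of connected graphs whose spectrum consists of exactly one eigenvalue $r>2$, exactly one eigenvalue $s<-1$, and all remaining eigenvalues (with multiplicity) equal to $2$ or $-1$. *)

(* Defs.v *)
From HB Require Import structures.
From mathcomp Require Import all_boot all_order all_algebra all_field.
Set Implicit Arguments. Unset Strict Implicit. Unset Printing Implicit Defensive.
Import Order.TTheory GRing.Theory Num.Theory.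
Local Open Scope ring_scope.

Definition simple_graph (n : nat) (e : rel 'I_n) : Prop :=
  symmetric e /\ irreflexive e.

Definition connected_graph (n : nat) (e : rel 'I_n) : Prop :=
  (0 < n)%N /\ forall x y : 'I_n, connect e x y.

Definition adjmx (n : nat) (e : rel 'I_n) : 'M[algC]_n :=
  \matrix_(i, j) (e i j)%:R.

(* spectrum = multiset of roots of the characteristic polynomial:
   exactly one eigenvalue r > 2, exactly one s < -1, all others 2 or -1 *)
Definition spectrum_F (n : nat) (e : rel 'I_n) : Prop :=
  exists (r s : algC) (a b : nat),
    2 < r /\ s < -1 /\
    char_poly (adjmx e) =
      ('X - r%:P) * ('X - s%:P) * ('X - 2%:P) ^+ a * ('X + 1) ^+ b.

Definition in_F (n : nat) (e : rel 'I_n) : Prop :=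
  simple_graph e /\ connected_graph e /\ spectrum_F e.

Definition is_clique (n : nat) (e : rel 'I_n) (C : {set 'I_n}) : bool :=
  [forall x in C, forall y in C, (x != y) ==> e x y].

Definition is_max_clique (n : nat) (e : rel 'I_n) (C : {set 'I_n}) : Prop :=
  is_clique e C /\ forall D : {set 'I_n}, is_clique e D -> (#|D| <= #|C|)%N.

(* number of edges with exactly one endpoint in C (each edge counted once,
   as the ordered pair (inside endpoint, outside endpoint)) *)
Definition boundary_edges (n : nat) (e : rel 'I_n) (C : {set 'I_n}) : nat :=
  #|[set p : 'I_n * 'I_n | [&& e p.1 p.2, p.1 \in C & p.2 \notin C]]|.

Definition nbrs_in (n : nat) (e : rel 'I_n) (v : 'I_n) (C : {set 'I_n}) : {set 'I_n} :=
  [set u in C | e v u].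

(* Main.v *)
Require Import Defs.
From HB Require Import structures.
From mathcomp Require Import all_boot all_order all_algebra all_field.
Set Implicit Arguments. Unset Strict Implicit. Unset Printing Implicit Defensive.
Import Order.TTheory GRing.Theory Num.Theory.
Local Open Scope ring_scope.
From mathcomp Require Import ring.

Lemma char_poly_similar n (P D : 'M[algC]_n) : P \in unitmx ->
  char_poly (invmx P *m D *m P) = char_poly D.
Proof.
move=> Pu; rewrite /char_poly /char_poly_mx.
have -> : 'X%:M - map_mx polyC (invmx P *m D *m P) =
  map_mx polyC (invmx P) *m ('X%:M - map_mx polyC D) *m map_mx polyC P.
  rewrite mulmxBr mulmxBl !map_mxM; congr (_ - _).
  by rewrite mul_mx_scalar -scalemxAl -map_mxM mulVmx // map_mx1 scalemx1.
rewrite !det_mulmx mulrC mulrA -det_mulmx -map_mxM mulmxV // map_mx1 det1 mul1r.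
done.
Qed.

Lemma adj_herm n (e : rel 'I_n) : symmetric e -> adjmx e \is hermsymmx.
Proof.
move=> se; apply/is_hermitianmxP; rewrite expr0 scale1r.
apply/matrixP => i j; rewrite !mxE conjC_nat se //.
Qed.

Lemma root_F (r s d : algC) (a b : nat) :
  (('X - r%:P) * ('X - s%:P) * ('X - 2%:P) ^+ a * ('X + 1) ^+ b).[d] = 0 ->
  [\/ d = r, d = s, d = 2 | d = -1].
Proof.
move/eqP; rewrite !hornerE !mulf_eq0 !expf_eq0 !subr_eq0.
case/orP => [/orP [/orP [/eqP->|/eqP->] | /andP [_ /eqP->]] | /andP[_ H]].
- by constructor 1.
- by constructor 2.
- by constructor 3.
by constructor 4; apply/eqP; rewrite -subr_eq0 opprK.
Qed.

Lemma prod_two n (dd : 'I_n -> algC) i j : i != j ->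
  \prod_l ('X - (dd l)%:P) =
  ('X - (dd i)%:P) * (('X - (dd j)%:P) * \prod_(l | (l != i) && (l != j)) ('X - (dd l)%:P)).
Proof.
move=> ij; rewrite (bigD1 i) //=; congr (_ * _).
rewrite (bigD1 j) /=; last by rewrite eq_sym.
by congr (_ * _); apply: eq_bigl => l; rewrite andbC.
Qed.

Lemma uniq_eig n (dd : 'I_n -> algC) (t : algC) (Q : {poly algC}) :
  \prod_l ('X - (dd l)%:P) = ('X - t%:P) * Q -> Q.[t] != 0 ->
  forall i j, dd i = t -> dd j = t -> i = j.
Proof.
move=> E Qt i j di dj; apply/eqP; apply/negPn/negP => ij.
move: E; rewrite (prod_two dd ij) di dj => /mulfI E.
have : ('X - t%:P) != 0 :> {poly algC} by rewrite polyXsubC_eq0.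
move=> /E {}E; move: Qt; rewrite -E hornerM hornerXsubC subrr mul0r.
by rewrite eqxx.
Qed.

Lemma sum_uniq n (u : pred 'I_n) (F : 'I_n -> algC) :
  (forall i j, u i -> u j -> i = j) ->
  \sum_i (u i)%:R * F i = if [pick i | u i] is Some i0 then F i0 else 0.
Proof.
move=> U; case: pickP => [i0 ui0 | N].
  rewrite (bigD1 i0) //= ui0 mul1r big1 ?addr0 // => j ji.
  case uj: (u j); last by rewrite mul0r.
  by move: ji; rewrite (U _ _ uj ui0) eqxx.
by rewrite big1 // => j _; rewrite N mul0r.
Qed.

Lemma sqrt_conj (x : algC) : 0 <= x -> sqrtC x * (sqrtC x)^* = x.
Proof.
move=> x0; have s0 : 0 <= sqrtC x by rewrite sqrtC_ge0.
by rewrite (geC0_conj s0) -expr2 sqrtCK.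
Qed.

Definition MM n (e : rel 'I_n) : 'M[algC]_n := adjmx e *m adjmx e - adjmx e - 2%:M.

Local Open Scope sesquilinear_scope.

Lemma MM_diag n (e : rel 'I_n) (P : 'M[algC]_n) (d : 'rV[algC]_n) :
  P \is unitarymx -> adjmx e = invmx P *m diag_mx d *m P ->
  forall j k, MM e j k = \sum_l (P l j)^* * (d 0 l * d 0 l - d 0 l - 2) * P l k.
Proof.
move=> Pu AE j k.
have Pi : P \in unitmx := unitarymx_unit Pu.
have iP : invmx P = P^t* := invmx_unitary Pu.
have PP : P *m P^t* = 1%:M by apply/unitarymxP.
have E : MM e = P^t* *m (diag_mx d *m diag_mx d - diag_mx d - 2%:M) *m P.
  rewrite /MM AE iP !mulmxBr !mulmxBl; congr (_ - _ - _).
    by rewrite !mulmxA -[P^t* *m _ *m P *m P^t*]mulmxA PP mulmx1.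
  by rewrite mul_mx_scalar -scalemxAl -iP mulVmx // scalemx1.
rewrite E; have -> : diag_mx d *m diag_mx d - diag_mx d - 2%:M =
    diag_mx (\row_l (d 0 l * d 0 l - d 0 l - 2)).
  apply/matrixP => a c; rewrite mul_diag_mx !mxE.
  by case: (a == c); rewrite ?mulr1n ?mulr0n ?subr0 ?mulr0.
rewrite mul_mx_diag mxE; apply: eq_bigr => l _; rewrite !mxE.
by [].
Qed.

Lemma spec_decomp n (e : rel 'I_n) : simple_graph e -> spectrum_F e ->
  exists g1 g2 : 'I_n -> algC,
    forall i j, MM e i j = g1 i * (g1 j)^* + g2 i * (g2 j)^*.
Proof.
move=> [se ie] [r [s [a [b [r2 [s1 E]]]]]].
have hA := adj_herm se.
have /orthomx_spectralP AE := hermitian_normalmx hA.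
set P := spectralmx (adjmx e) in AE; set d := spectral_diag (adjmx e) in AE.
have Pu : P \is unitarymx := spectral_unitarymx _.
have Pi : P \in unitmx := spectral_unit _.
have cpE : \prod_l ('X - (d 0 l)%:P) = char_poly (adjmx e).
  rewrite [in RHS]AE char_poly_similar // char_poly_trig ?diag_mx_is_trig //.
  by apply: eq_bigr => l _; rewrite mxE eqxx mulr1n.
have dval l : [\/ d 0 l = r, d 0 l = s, d 0 l = 2 | d 0 l = -1].
  apply: (@root_F r s _ a b); rewrite -E -cpE horner_prod (bigD1 l) //=.
  by rewrite hornerXsubC subrr mul0r.
have h12 : (-1 : algC) < 2 by rewrite (@lt_trans _ _ 0) ?ltrN10 ?ltr0n.
have sr : s < r by rewrite (lt_trans s1) // (lt_trans h12).
have r0 : 0 < r by rewrite (lt_trans _ r2) ?ltr0n.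
have Ur : forall i j, d 0 i = r -> d 0 j = r -> i = j.
  apply: (@uniq_eig _ _ _ (('X - s%:P) * ('X - 2%:P) ^+ a * ('X + 1) ^+ b)).
    by rewrite cpE E !mulrA.
  rewrite !hornerE !mulf_neq0 ?expf_neq0 //.
  - by rewrite subr_eq0 gt_eqF.
  - by rewrite subr_eq0 gt_eqF.
  - by rewrite gt_eqF // addr_gt0.
have Us : forall i j, d 0 i = s -> d 0 j = s -> i = j.
  apply: (@uniq_eig _ _ _ (('X - r%:P) * ('X - 2%:P) ^+ a * ('X + 1) ^+ b)).
    by rewrite cpE E !mulrA [('X - r%:P) * _]mulrC.
  rewrite !hornerE !mulf_neq0 ?expf_neq0 //.
  - by rewrite subr_eq0 lt_eqF.
  - by rewrite subr_eq0 lt_eqF // (lt_trans s1).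
  - by rewrite lt_eqF // -ltrBrDr sub0r.
have fr0 : 0 <= r * r - r - 2.
  rewrite (_ : r * r - r - 2 = (r - 2) * (r + 1)); last by ring.
  by apply: mulr_ge0; [rewrite subr_ge0 ltW | rewrite addr_ge0 // ltW].
have fs0 : 0 <= s * s - s - 2.
  rewrite (_ : s * s - s - 2 = (2 - s) * (-1 - s)); last by ring.
  by apply: mulr_ge0; rewrite subr_ge0 ltW // (lt_trans s1).
exists (fun j => \sum_l (d 0 l == r)%:R * (sqrtC (r * r - r - 2) * (P l j)^*)).
exists (fun j => \sum_l (d 0 l == s)%:R * (sqrtC (s * s - s - 2) * (P l j)^*)).
move=> i j; rewrite (MM_diag Pu AE).
have key l : (P l i)^* * (d 0 l * d 0 l - d 0 l - 2) * P l j =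
   (d 0 l == r)%:R * ((r * r - r - 2) * (P l i)^* * P l j) +
   (d 0 l == s)%:R * ((s * s - s - 2) * (P l i)^* * P l j).
  have s2 : s != 2 by rewrite lt_eqF // (lt_trans s1).
  have s1' : s != -1 by rewrite lt_eqF.
  have r2' : r != 2 by rewrite gt_eqF.
  have r1' : r != -1 by rewrite gt_eqF // (lt_trans h12).
  case: (dval l) => ->.
  - by rewrite eqxx gt_eqF // mul1r mul0r addr0; ring.
  - by rewrite eqxx lt_eqF // mul1r mul0r add0r; ring.
  - rewrite !(eq_sym 2) (negbTE r2') (negbTE s2) !mul0r addr0; ring.
  - rewrite !(eq_sym (-1)) (negbTE r1') (negbTE s1') !mul0r addr0; ring.
under eq_bigr => l _ do rewrite key.
rewrite big_split /= !(sum_uniq (u := fun l => d 0 l == r)) //.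
rewrite !(sum_uniq (u := fun l => d 0 l == s)); first last.
- by move=> x y /eqP + /eqP; exact: Us.
- by move=> x y /eqP + /eqP; exact: Us.
- by move=> x y /eqP + /eqP; exact: Us.
have E1 := sqrt_conj fr0; have E2 := sqrt_conj fs0.
set fr := r * r - r - 2 in E1 *; set fs := s * s - s - 2 in E2 *.
case: pickP => [x _|_]; case: pickP => [y _|_];
  rewrite ?rmorph0 ?mul0r ?mulr0 ?add0r ?addr0 ?rmorphM /= ?conjCK.
- rewrite -{1}E1 -{1}E2; ring.
- rewrite -{1}E1; ring.
- rewrite -{1}E2; ring.
- by [].
all: by move=> x y /eqP + /eqP; exact: Ur.
Qed.

Local Close Scope sesquilinear_scope.

Definition Av n (e : rel 'I_n) (x : 'I_n -> algC) (l : 'I_n) : algC :=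
  \sum_j (e l j)%:R * x j.
Definition Mv n (e : rel 'I_n) (x : 'I_n -> algC) (i : 'I_n) : algC :=
  \sum_j MM e i j * x j.

Lemma MM_E n (e : rel 'I_n) i j :
  MM e i j = \sum_l (e i l)%:R * (e l j)%:R - (e i j)%:R - (i == j)%:R * 2.
Proof.
rewrite !mxE mulr_natl; congr (_ - _ - _).
by apply: eq_bigr => l _; rewrite !mxE.
Qed.

Lemma Mv_E n (e : rel 'I_n) x i :
  Mv e x i = Av e (Av e x) i - Av e x i - 2 * x i.
Proof.
rewrite /Mv /Av; under eq_bigr => j _ do rewrite MM_E !mulrBl.
rewrite !big_split /= !sumrN; congr (_ - _ - _).
  under eq_bigr => j _ do rewrite mulr_suml.
  rewrite exchange_big /=; apply: eq_bigr => l _.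
  by rewrite mulr_sumr; apply: eq_bigr => j _; rewrite mulrA.
rewrite (bigD1 i) //= big1 ?addr0; first by rewrite eqxx mul1r mulrC.
by move=> j /negbTE ji; rewrite eq_sym ji mul0r mul0r.
Qed.

Lemma quad_sym n (e : rel 'I_n) (x : 'I_n -> algC) : symmetric e ->
  \sum_i (x i)^* * Av e (Av e x) i = \sum_l (Av e x l)^* * Av e x l.
Proof.
move=> se; rewrite /Av.
under eq_bigr => i _ do rewrite mulr_sumr.
rewrite exchange_big /=; apply: eq_bigr => l _.
rewrite rmorph_sum mulr_suml; apply: eq_bigr => i _.
by rewrite rmorphM /= conjC_nat se mulrA [_ * (e l i)%:R]mulrC.
Qed.

Lemma clq_E n (e : rel 'I_n) (C : {set 'I_n}) : irreflexive e -> is_clique e C ->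
  forall i j, i \in C -> j \in C -> e i j = (i != j).
Proof.
move=> ie /forallP cC i j iC jC; case: eqP => [->|/eqP ij]; first by rewrite ie.
by move: (cC i); rewrite iC /= => /forallP /(_ j); rewrite jC ij.
Qed.

Lemma quad_clique n (e : rel 'I_n) (C : {set 'I_n}) (x : 'I_n -> algC) :
  symmetric e -> irreflexive e -> is_clique e C -> (forall j, j \notin C -> x j = 0) ->
  \sum_i (x i)^* * Mv e x i =
  (#|C|%:R - 3) * ((\sum_(j in C) x j)^* * \sum_(j in C) x j) +
  \sum_(l | l \notin C) (Av e x l)^* * Av e x l.
Proof.
move=> se ie cC x0.
have clq := clq_E ie cC.
set X := \sum_(j in C) x j.
have AvC l : l \in C -> Av e x l = X - x l.
  move=> lC; rewrite /Av (bigID (mem C)) /= [X in _ + X]big1 ?addr0; last first.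
    by move=> j /x0 ->; rewrite mulr0.
  rewrite /X (bigD1 l lC) /= [in RHS](bigD1 l lC) /= ie mul0r add0r.
  rewrite [x l + _]addrC addrK; apply: eq_bigr => j /andP [jC jl].
  by rewrite clq // eq_sym jl mul1r.
have outC (F : 'I_n -> algC) : \sum_i (x i)^* * F i = \sum_(i in C) (x i)^* * F i.
  rewrite (bigID (mem C)) /= [X in _ + X]big1 ?addr0 // => j /x0 ->.
  by rewrite rmorph0 mul0r.
under eq_bigr => i _ do rewrite Mv_E !mulrBr.
rewrite !big_split /= !sumrN quad_sym // (bigID (mem C)) /=.
rewrite !outC.
under eq_bigr => i iC do rewrite AvC //.
under [X in _ - X - _]eq_bigr => i iC do rewrite AvC //.
set Q := \sum_(i in C) (x i)^* * x i.
have E1 : \sum_(i in C) (x i)^* * (2 * x i) = 2 * Q.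
  by rewrite /Q mulr_sumr; apply: eq_bigr => i _; rewrite mulrCA.
have E2 : \sum_(i in C) (x i)^* * (X - x i) = X^* * X - Q.
  under eq_bigr => i _ do rewrite mulrBr.
  by rewrite big_split /= sumrN -mulr_suml -rmorph_sum.
have E3 : \sum_(i in C) (X - x i)^* * (X - x i) = #|C|%:R * (X^* * X) - X^* * X - X^* * X + Q.
  under eq_bigr => i _ do rewrite rmorphB /= mulrBl !mulrBr.
  rewrite !big_split /= !sumrN sumr_const -mulr_sumr -/X big_split /= sumrN -mulr_suml -rmorph_sum -/X -/Q.
  by rewrite mulr_natl; ring.
rewrite E1 E2 E3; ring.
Qed.

Lemma solve2 (a1 a2 a3 b1 b2 b3 : algC) : exists c1 c2 c3 : algC,
  [|| c1 != 0, c2 != 0 | c3 != 0] /\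
  c1 * a1 + c2 * a2 + c3 * a3 = 0 /\ c1 * b1 + c2 * b2 + c3 * b3 = 0.
Proof.
have [z|nz] := boolP [&& a1 == 0, a2 == 0, b1 == 0 & b2 == 0].
  case/and4P: z => /eqP a10 _ /eqP b10 _.
  exists 1, 0, 0; rewrite oner_neq0 a10 b10; split => //.
  by rewrite !mul0r mulr0 !addr0.
have [cr|ncr] := boolP [|| a2 * b3 - a3 * b2 != 0, a3 * b1 - a1 * b3 != 0
                         | a1 * b2 - a2 * b1 != 0].
  exists (a2 * b3 - a3 * b2), (a3 * b1 - a1 * b3), (a1 * b2 - a2 * b1).
  split; first exact: cr.
  split; ring.
move: ncr; rewrite !negb_or !negbK => /and3P [/eqP c1 /eqP c2 /eqP c3].
have [an|az] := boolP ((a1 != 0) || (a2 != 0)).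
  exists a2, (- a1), 0; split; first by rewrite oppr_eq0 eqxx orbF orbC.
  split; first by clear nz an; ring.
  have -> : a2 * b1 + - a1 * b2 + 0 * b3 = - (a1 * b2 - a2 * b1) by clear nz an c1 c2 c3; ring.
  by rewrite c3 oppr0.
move: az; rewrite negb_or !negbK => /andP [/eqP a10 /eqP a20].
exists b2, (- b1), 0; split.
  rewrite oppr_eq0 eqxx orbF orbC; move: nz; rewrite a10 a20 !eqxx /=.
  by rewrite negb_and orbC.
rewrite a10 a20; clear nz c1 c2 c3; split; ring.
Qed.

Lemma spec3 n (e : rel 'I_n) (g1 g2 : 'I_n -> algC) :
  (forall i j, MM e i j = g1 i * (g1 j)^* + g2 i * (g2 j)^*) ->
  forall x1 x2 x3 : 'I_n -> algC, exists c1 c2 c3 : algC,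
  [|| c1 != 0, c2 != 0 | c3 != 0] /\
  forall i, Mv e (fun j => c1 * x1 j + c2 * x2 j + c3 * x3 j) i = 0.
Proof.
move=> dec x1 x2 x3.
pose u (g : 'I_n -> algC) (x : 'I_n -> algC) := \sum_j (g j)^* * x j.
have [c1 [c2 [c3 [nz [E1 E2]]]]] :=
  solve2 (u g1 x1) (u g1 x2) (u g1 x3) (u g2 x1) (u g2 x2) (u g2 x3).
exists c1, c2, c3; split => // i.
have lin g : u g (fun j => c1 * x1 j + c2 * x2 j + c3 * x3 j) =
   c1 * u g x1 + c2 * u g x2 + c3 * u g x3.
  rewrite /u !mulr_sumr -!big_split /=; apply: eq_bigr => j _; ring.
rewrite /Mv; under eq_bigr => j _ do rewrite dec mulrDl -!mulrA.
rewrite big_split /= -!mulr_sumr.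
by rewrite -/(u g1 _) -/(u g2 _) (lin g1) (lin g2) E1 E2 !mulr0 addr0.
Qed.

Lemma det_nz (x1 x2 x3 y1 y2 y3 : bool) :
  (x1, y1) != (x2, y2) -> (x1, y1) != (x3, y3) -> (x2, y2) != (x3, y3) ->
  ((x2%:Z - x1%:Z) * (y3%:Z - y1%:Z) - (x3%:Z - x1%:Z) * (y2%:Z - y1%:Z))%R != 0.
Proof. by case: x1; case: x2; case: x3; case: y1; case: y2; case: y3. Qed.

Lemma lin3 (x1 x2 x3 y1 y2 y3 : bool) (c1 c2 c3 : algC) :
  (x1, y1) != (x2, y2) -> (x1, y1) != (x3, y3) -> (x2, y2) != (x3, y3) ->
  c1 + c2 + c3 = 0 ->
  c1 * x1%:R + c2 * x2%:R + c3 * x3%:R = 0 ->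
  c1 * y1%:R + c2 * y2%:R + c3 * y3%:R = 0 ->
  [&& c1 == 0, c2 == 0 & c3 == 0].
Proof.
move=> d12 d13 d23 E0 E1 E2.
pose D : int := ((x2%:Z - x1%:Z) * (y3%:Z - y1%:Z) - (x3%:Z - x1%:Z) * (y2%:Z - y1%:Z))%R.
have Dn : D != 0 by rewrite /D; apply: det_nz.
have H2 : D%:~R * c2 = 0.
  rewrite (_ : D%:~R * c2 = (y3%:R - y1%:R) * ((c1 * x1%:R + c2 * x2%:R + c3 * x3%:R) - x1%:R * (c1 + c2 + c3))
     - (x3%:R - x1%:R) * ((c1 * y1%:R + c2 * y2%:R + c3 * y3%:R) - y1%:R * (c1 + c2 + c3))).
    by rewrite E0 E1 E2; clear E0 E1 E2 d12 d13 d23 Dn; ring.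
  rewrite /D; clear E0 E1 E2 d12 d13 d23 Dn; ring.
have H3 : D%:~R * c3 = 0.
  rewrite (_ : D%:~R * c3 = (x2%:R - x1%:R) * ((c1 * y1%:R + c2 * y2%:R + c3 * y3%:R) - y1%:R * (c1 + c2 + c3))
     - (y2%:R - y1%:R) * ((c1 * x1%:R + c2 * x2%:R + c3 * x3%:R) - x1%:R * (c1 + c2 + c3))).
    by rewrite E0 E1 E2; clear E0 E1 E2 d12 d13 d23 Dn; ring.
  rewrite /D; clear E0 E1 E2 d12 d13 d23 Dn; ring.
have Dn' : (D%:~R : algC) != 0 by rewrite intr_eq0.
move: H2 H3 => /eqP; rewrite mulf_eq0 (negbTE Dn') /= => /eqP c20.
move=> /eqP; rewrite mulf_eq0 (negbTE Dn') /= => /eqP c30.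
by move: E0; rewrite c20 c30 !addr0 => ->; rewrite eqxx.
Qed.

Lemma AvC_lem n (e : rel 'I_n) (C : {set 'I_n}) (x : 'I_n -> algC) :
  irreflexive e -> is_clique e C -> (forall j, j \notin C -> x j = 0) ->
  forall l, l \in C -> Av e x l = (\sum_(j in C) x j) - x l.
Proof.
move=> ie cC x0 l lC; have clq := clq_E ie cC.
rewrite /Av (bigID (mem C)) /= [X in _ + X]big1 ?addr0; last first.
  by move=> j /x0 ->; rewrite mulr0.
rewrite (bigD1 l lC) /= [in RHS](bigD1 l lC) /= ie mul0r add0r.
rewrite [x l + _]addrC addrK; apply: eq_bigr => j /andP [jC jl].
by rewrite clq // eq_sym jl mul1r.
Qed.

Lemma sum_delta n (F : 'I_n -> algC) p : \sum_j F j * (j == p)%:R = F p.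
Proof.
rewrite (bigD1 p) //= eqxx mulr1 big1 ?addr0 // => j /negbTE ->.
by rewrite mulr0.
Qed.

Lemma three_types (T : finType) (C : {set T}) (P Q : pred T) :
  (exists2 a, a \in C & P a) -> (exists2 b, b \in C & ~~ P b) ->
  (exists2 a, a \in C & Q a) -> (exists2 b, b \in C & ~~ Q b) ->
  (exists2 q, q \in C & P q != Q q) -> (exists2 q, q \in C & P q == Q q) ->
  exists p1 p2 p3, [/\ p1 \in C, p2 \in C, p3 \in C &
    [/\ (P p1, Q p1) != (P p2, Q p2), (P p1, Q p1) != (P p3, Q p3)
      & (P p2, Q p2) != (P p3, Q p3)]].
Proof.
move=> [a aC Pa] [b bC Pb] [a' aC' Qa] [b' bC' Qb] [q qC Pq] [q' qC' Pq'].
exists q, q'.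
move: Pq Pq'; case: (P q); case: (Q q) => //= _; case: (P q'); case: (Q q') => //= _.
- by exists b; split => //; rewrite !xpair_eqE /= ?(negbTE Pb) ?andbF ?andFb.
- by exists a'; split => //; rewrite !xpair_eqE /= ?Qa ?andbF ?andFb ?andbT.
- by exists b'; split => //; rewrite !xpair_eqE /= ?(negbTE Qb) ?andbF ?andFb.
- by exists a; split => //; rewrite !xpair_eqE /= ?Pa ?andbF ?andFb ?andbT.
Qed.

Lemma bad_pair n (e : rel 'I_n) (C : {set 'I_n}) (g1 g2 : 'I_n -> algC) (v0 v : 'I_n) :
  symmetric e -> irreflexive e -> is_clique e C ->
  (forall i j, MM e i j = g1 i * (g1 j)^* + g2 i * (g2 j)^*) ->
  v0 \notin C -> v \notin C ->
  (exists2 a, a \in C & e v0 a) -> (exists2 b, b \in C & ~~ e v0 b) ->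
  (exists2 a, a \in C & e v a) -> (exists2 b, b \in C & ~~ e v b) ->
  (exists2 q, q \in C & e v0 q != e v q) -> (exists2 q, q \in C & e v0 q == e v q) ->
  False.
Proof.
move=> se ie cC dec v0C vC h1 h2 h3 h4 h5 h6.
have h1' := h1.
have [p1 [p2 [p3 [p1C p2C p3C [d12 d13 d23]]]]] := three_types h1 h2 h3 h4 h5 h6.
have [c1 [c2 [c3 [cnz null]]]] := spec3 dec (fun j => (j == p1)%:R)
  (fun j => (j == p2)%:R) (fun j => (j == p3)%:R).
set x := (fun j => c1 * (j == p1)%:R + c2 * (j == p2)%:R + c3 * (j == p3)%:R) in null.
have x0 j : j \notin C -> x j = 0.
  move=> jC; rewrite /x.
  have ne p : p \in C -> (j == p) = false.
    by move=> pC; apply/eqP => jp; move: jC; rewrite jp pC.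
  by rewrite !ne // !mulr0 !addr0.
have Avx w : Av e x w = c1 * (e w p1)%:R + c2 * (e w p2)%:R + c3 * (e w p3)%:R.
  rewrite /Av /x; under eq_bigr => j _ do rewrite !mulrDr.
  rewrite !big_split /=.
  have sd (c : algC) p : \sum_j (e w j)%:R * (c * (j == p)%:R) = c * (e w p)%:R.
    rewrite (bigD1 p) //= eqxx mulr1 big1 ?addr0; first by rewrite mulrC.
    by move=> j /negbTE ->; rewrite mulr0 mulr0.
  by rewrite !sd.
have neq (p p' : 'I_n) : (e v0 p, e v p) != (e v0 p', e v p') -> p != p'.
  by apply: contra => /eqP ->.
have k3 : (3 <= #|C|)%N.
  have -> : 3%N = #|[set p1; p2; p3]|.
    rewrite -setUA cardsU1 cards2 !inE negb_or (neq _ _ d12) (neq _ _ d13).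
    by rewrite (neq _ _ d23).
  apply: subset_leq_card; apply/subsetP => j; rewrite !inE.
  by case/orP => [/orP [] |] /eqP ->.
have Xs : \sum_(j in C) x j = c1 + c2 + c3.
  rewrite /x !big_split /=.
  have sd p : p \in C -> \sum_(j in C) (j == p)%:R = 1 :> algC.
    move=> pC; rewrite (bigD1 p) //= eqxx big1 ?addr0 // => j /andP [_ /negbTE ->] //.
  by rewrite -!mulr_sumr !sd // !mulr1.
have Q := quad_clique se ie cC x0.
have Q0 : \sum_i (x i)^* * Mv e x i = 0 by rewrite big1 // => i _; rewrite null mulr0.
have sig0 l : l \notin C -> Av e x l = 0.
  move=> lC; move: Q; rewrite Q0 => /esym /eqP; rewrite paddr_eq0; first last.
  - by apply: sumr_ge0 => i _; rewrite mulrC mul_conjC_ge0.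
  - apply: mulr_ge0; last by rewrite mulrC mul_conjC_ge0.
    by rewrite subr_ge0 (ler_nat _ 3).
  move=> /andP [_ /eqP /psumr_eq0P H].
  have nn : forall i, i \notin C -> 0 <= (Av e x i)^* * Av e x i.
    by move=> i _; rewrite mulrC mul_conjC_ge0.
  by have := H nn l lC; rewrite mulrC => /eqP; rewrite mul_conjC_eq0 => /eqP.
have E1 : c1 * (e v0 p1)%:R + c2 * (e v0 p2)%:R + c3 * (e v0 p3)%:R = 0.
  by rewrite -Avx sig0.
have E2 : c1 * (e v p1)%:R + c2 * (e v p2)%:R + c3 * (e v p3)%:R = 0.
  by rewrite -Avx sig0.
have E0 : c1 + c2 + c3 = 0.
  have := null v0; rewrite Mv_E sig0 // x0 // mulr0 !subr0 [Av e (Av e x) v0]/Av.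
  rewrite (bigID (mem C)) /= [X in _ + X]big1 ?addr0; last first.
    by move=> l /sig0 ->; rewrite mulr0.
  under eq_bigr => l lC do rewrite (AvC_lem ie cC x0 lC) mulrBr.
  rewrite big_split /= sumrN -mulr_suml.
  have -> : \sum_(l in C) (e v0 l)%:R * x l = Av e x v0.
    rewrite /Av [in RHS](bigID (mem C)) /= [X in _ = _ + X]big1 ?addr0 //.
    by move=> l /x0 ->; rewrite mulr0.
  rewrite sig0 // subr0 Xs => /eqP; rewrite mulf_eq0 => /orP [|/eqP //].
  case: h1' => a aC ea.
  by rewrite -natr_sum pnatr_eq0 (bigD1 a) //= ea.
have := lin3 d12 d13 d23 E0 E1 E2.
by move: cnz; case: (c1 == 0); case: (c2 == 0); case: (c3 == 0).
Qed.

Unset Implicit Arguments.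
Set Strict Implicit.
Theorem lemma4p1 (n : nat) (e : rel 'I_n) (C : {set 'I_n}) :
  in_F e ->
  is_max_clique e C ->
  (forall D : {set 'I_n}, is_max_clique e D ->
     (boundary_edges e C <= boundary_edges e D)%N) ->
  exists X Y : {set 'I_n},
    [/\ X != set0, Y != set0, [disjoint X & Y], X :|: Y = C &
     forall v : 'I_n, v \notin C ->
       nbrs_in e v C = X \/ nbrs_in e v C = Y \/ nbrs_in e v C = set0].
Proof.
move=> [[se ie] [[n0 _] spF]] [cC maxC] _.
have [g1 [g2 dec]] := spec_decomp (conj se ie) spF.
have notC v : v \notin C -> exists2 b, b \in C & ~~ e v b.
  move=> vC; case: (boolP [exists b in C, ~~ e v b]) => [/exists_inP [b bC nb] | /exists_inPn H].
    by exists b.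
  exfalso.
  have cl : is_clique e (v |: C).
    apply/forallP => x; apply/implyP => xin; apply/forallP => y; apply/implyP => yin.
    apply/implyP => xy.
    move: xin yin xy; rewrite !in_setU1 => /orP [/eqP -> | xC] /orP [/eqP -> | yC].
    - by rewrite eqxx.
    - by move=> _; have := H y yC; rewrite negbK.
    - by move=> _; rewrite se; have := H x xC; rewrite negbK.
    - by move=> xy; rewrite (clq_E ie cC).
  by have := maxC _ cl; rewrite cardsU1 vC add1n ltnn.
have k2 : (2 <= #|C|)%N.
  pose i0 := Ordinal n0.
  case: (boolP [exists l, e i0 l]) => [/existsP [l el] | /existsPn H].
    have il : i0 != l by apply: contraTneq el => ->; rewrite ie.
    have cl : is_clique e [set i0; l].
      apply/forallP => x; apply/implyP => xin; apply/forallP => y; apply/implyP => yin.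
      apply/implyP => xy.
      move: xin yin xy; rewrite !inE => /orP [/eqP -> | /eqP ->] /orP [/eqP -> | /eqP ->].
      - by rewrite eqxx.
      - by [].
      - by rewrite se.
      - by rewrite eqxx.
    by have := maxC _ cl; rewrite cards2 il.
  exfalso.
  have nn : 0 <= g1 i0 * (g1 i0)^* + g2 i0 * (g2 i0)^* by rewrite addr_ge0 // mul_conjC_ge0.
  move: nn; rewrite -dec MM_E big1 ?ie ?eqxx ?mul1r ?sub0r ?subr0; last first.
    by move=> l _; move: (H l) => /negbTE ->; rewrite mul0r.
  by rewrite /= ?mulr0n ?oppr0 ?sub0r ?add0r lt_geF // oppr_lt0 ltr0n.
case: (boolP [exists v, (v \notin C) && (nbrs_in e v C != set0)]) =>
   [/existsP [v0 /andP [v0C nz]] | /existsPn H].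
  exists (nbrs_in e v0 C), (C :\: nbrs_in e v0 C); split => //.
  - have [b bC nb] := notC v0 v0C.
    by apply/set0Pn; exists b; rewrite !inE bC (negbTE nb).
  - by rewrite disjoint_subset; apply/subsetP => y; rewrite !inE; case: (y \in C); case: (e v0 y).
  - by apply/setP => y; rewrite !inE; case: (y \in C); case: (e v0 y).
  move=> v vC.
  case: (eqVneq (nbrs_in e v C) (nbrs_in e v0 C)) => [-> | nX]; first by left.
  right; case: (eqVneq (nbrs_in e v C) (C :\: nbrs_in e v0 C)) => [-> | nY]; first by left.
  right; case: (eqVneq (nbrs_in e v C) set0) => [-> | nv] //.
  exfalso; apply: (bad_pair se ie cC dec v0C vC).
  - by case/set0Pn: nz => a; rewrite inE => /andP [aC ea]; exists a.
  - exact: notC.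
  - by case/set0Pn: nv => a; rewrite inE => /andP [aC ea]; exists a.
  - exact: notC.
  - case: (boolP [exists q in C, e v0 q != e v q]) => [/exists_inP // | /exists_inPn H].
    case/eqP: nX; apply/setP => q; rewrite !inE.
    case qC: (q \in C) => //=; move: (H q qC); rewrite negbK => /eqP ->.
    done.
  - case: (boolP [exists q in C, e v0 q == e v q]) => [/exists_inP // | /exists_inPn H].
    case/eqP: nY; apply/setP => q; rewrite !inE.
    case qC: (q \in C) => /=. 
      by move: (H q qC); case: (e v0 q); case: (e v q).
    by [].
have [p pC] : exists p, p \in C.
  by apply/set0Pn; rewrite -card_gt0 (leq_trans _ k2).
exists [set p], (C :\ p); split.
- by apply/set0Pn; exists p; rewrite inE.
- by rewrite -card_gt0; move: k2; rewrite (cardsD1 p C) pC add1n ltnS.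
- by rewrite disjoint_subset; apply/subsetP => y; rewrite !inE => /eqP ->; rewrite eqxx.
- exact: setD1K.
move=> v vC; right; right.
by move: (H v); rewrite vC /= negbK => /eqP.
Qed.
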